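(* Let $x,y \in \mathcal{G}$. We have that \begin{align*} \eta_x^2 = \eta_x\sigma(x,x^{-1}), & \text{ } n_x^2 = n_x, \\ \eta_x = 0 \iff \sigma(x,x^{-1}) = 0 \iff & \Gamma(x) = 0 \iff n_x = 0, \\ r(x) = r(y) \implies (\eta_x\eta_y = 0 & \iff \eta_y\eta_x = 0 \iff n_xn_y = 0), \\ d(x) = r(y) \implies \Gamma(x)n_y & = n_{xy}\Gamma(x), \\ r(x) = r(y) \implies n_xn_y & = n_yn_x. \end{align*}
   Context: Let $\mathbb{K}$ be a field and $\mathbb{K}^*$ its multiplicative group. Let $\mathcal{G}$ be a groupoid (a set with a partially defined associative product in which each $g$ has domain $d(g)=g^{-1}g$, range $r(g)=gg^{-1}$ and inverse $g^{-1}$; $\exists gh$ iff $d(g)=r(h)$). A $\mathbb{K}$-semigroup is a semigroup $S$ with $0$ together with a map $\mathbb{K}\times S\to S$ such that $\alpha(\beta x)=(\alpha\beta)x$, $1_\mathbb{K}x=x$, $\alpha(xy)=(\alpha x)y=x(\alpha y)$ and $0_\mathbb{K}x = x0_\mathbb{K}=0_S$; it is $\mathbb{K}$-cancellative if moreover $\alpha x=\beta x$ with $0\neq x$ implies $\alpha=\beta$. Let $S$ be a $\mathbb{K}$-cancellative semigroup and $\Gamma:\mathcal{G}\to S$ a partial projective representation of $\mathcal{G}$, i.e. the composition of $\Gamma$ with the projection $S\to S/\lambda$ (where $x\lambda y$ iff $x=\alpha y$ for some $\alpha\in\mathbb{K}^*$) is a partial homomorphism: if $\exists xy$ then $\exists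 \varphi(x)\varphi(y)$ and $\varphi(x^{-1})\varphi(x)\varphi(y)=\varphi(x^{-1})\varphi(xy)$, $\varphi(x)\varphi(y)\varphi(y^{-1})=\varphi(xy)\varphi(y^{-1})$. Let $\sigma:\mathcal{G}\times\mathcal{G}\to\mathbb{K}$ be the factor set associated with $\Gamma$: on $\{(x,y)\in\mathcal{G}^2 : \Gamma(x)\Gamma(y)\neq 0\}$ it is the unique $\mathbb{K}^*$-valued map with $\Gamma(x^{-1})\Gamma(x)\Gamma(y) = \Gamma(x^{-1})\Gamma(xy)\sigma(x,y)$ and $\Gamma(x)\Gamma(y)\Gamma(y^{-1}) = \Gamma(xy)\Gamma(y^{-1})\sigma(x,y)$, and it is set equal to $0$ elsewhere. Assume that $\Gamma(r(x))$ and $\Gamma(d(x))$ are left and right identities to $\Gamma(x)$, respectively, for all $x\in\mathcal{G}$. Then $\sigma(x,x^{-1}) = \sigma(x^{-1},x)$ for all $x$. Write $\eta_x = \Gamma(x)\Gamma(x^{-1})$ and define $n_x = \eta_x\sigma(x^{-1},x)^{-1}$ if $\Gamma(x)\neq 0$, and $n_x=0$ if $\Gamma(x)=0$. *)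

(* Defs.v *)
From mathcomp Require Import all_boot all_algebra.
From Stdlib Require Import ClassicalEpsilon.
Set Implicit Arguments. Unset Strict Implicit. Unset Printing Implicit Defensive.
Import GRing.Theory.
Local Open Scope ring_scope.

(* A groupoid: a set with a partial product, defined exactly when d(g) = r(h),
   where d(g) = g^-1 g and r(g) = g g^-1.  The product is modelled by a total
   function [gmul] whose values on non-composable pairs are irrelevant. *)
Record groupoid := Groupoid {
  gcar :> Type;
  gmul : gcar -> gcar -> gcar;
  ginv : gcar -> gcar;
  ginvK : forall x, ginv (ginv x) = x;
  gassoc : forall x y z,
    gmul (ginv x) x = gmul y (ginv y) -> gmul (ginv y) y = gmul z (ginv z) ->
    gmul (gmul x y) z = gmul x (gmul y z);
  gd_mul : forall x y, gmul (ginv x) x = gmul y (ginv y) ->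
    gmul (ginv (gmul x y)) (gmul x y) = gmul (ginv y) y;
  gr_mul : forall x y, gmul (ginv x) x = gmul y (ginv y) ->
    gmul (gmul x y) (ginv (gmul x y)) = gmul x (ginv x);
  gmulKl : forall x y, gmul (ginv x) x = gmul y (ginv y) ->
    gmul (ginv x) (gmul x y) = y;
  gmulKr : forall x y, gmul (ginv x) x = gmul y (ginv y) ->
    gmul (gmul x y) (ginv y) = x
}.

Definition gd (G : groupoid) (x : G) : G := gmul (ginv x) x.
Definition gr (G : groupoid) (x : G) : G := gmul x (ginv x).

Record ksemigroup (K : fieldType) := KSemigroup {
  scar :> Type;
  smul : scar -> scar -> scar;
  szero : scar;
  sact : K -> scar -> scar;
  smulA : forall x y z, smul (smul x y) z = smul x (smul y z);
  smul0l : forall x, smul szero x = szero;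
  smul0r : forall x, smul x szero = szero;
  sactA : forall (a b : K) x, sact a (sact b x) = sact (a * b) x;
  sact1 : forall x, sact 1 x = x;
  sactMl : forall (a : K) x y, sact a (smul x y) = smul (sact a x) y;
  sactMr : forall (a : K) x y, sact a (smul x y) = smul x (sact a y);
  sact0 : forall x, sact 0 x = szero
}.

Definition kcancellative (K : fieldType) (S : ksemigroup K) : Prop :=
  forall (a b : K) (x : S), x <> szero S -> sact a x = sact b x -> a = b.

Definition lam (K : fieldType) (S : ksemigroup K) (x y : S) : Prop :=
  exists a : K, a != 0 /\ x = sact a y.

(* Gamma composed with S -> S/lambda is a partial homomorphism (equalities in
   S/lambda written out as the lambda relation on representatives). *)
Definition partial_proj_rep (K : fieldType) (G : groupoid) (S : ksemigroup K)
  (Gam : G -> S) : Prop :=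
  forall x y : G, gd x = gr y ->
    lam (smul (smul (Gam (ginv x)) (Gam x)) (Gam y))
        (smul (Gam (ginv x)) (Gam (gmul x y))) /\
    lam (smul (smul (Gam x) (Gam y)) (Gam (ginv y)))
        (smul (Gam (gmul x y)) (Gam (ginv y))).

Definition factor_set (K : fieldType) (G : groupoid) (S : ksemigroup K)
  (Gam : G -> S) (sigma : G -> G -> K) : Prop :=
  forall x y : G,
    ((gd x = gr y /\ smul (Gam x) (Gam y) <> szero S) ->
      sigma x y != 0 /\
      smul (smul (Gam (ginv x)) (Gam x)) (Gam y)
        = sact (sigma x y) (smul (Gam (ginv x)) (Gam (gmul x y))) /\
      smul (smul (Gam x) (Gam y)) (Gam (ginv y))
        = sact (sigma x y) (smul (Gam (gmul x y)) (Gam (ginv y)))) /\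
    (~ (gd x = gr y /\ smul (Gam x) (Gam y) <> szero S) -> sigma x y = 0).

Definition eta (K : fieldType) (G : groupoid) (S : ksemigroup K)
  (Gam : G -> S) (x : G) : S := smul (Gam x) (Gam (ginv x)).

Definition nelt (K : fieldType) (G : groupoid) (S : ksemigroup K)
  (Gam : G -> S) (sigma : G -> G -> K) (x : G) : S :=
  if excluded_middle_informative (Gam x = szero S) then szero S
  else sact (sigma (ginv x) x)^-1 (eta Gam x).

(* Main.v *)
Require Import Defs.
From mathcomp Require Import all_boot all_algebra.
From Stdlib Require Import Classical ClassicalEpsilon.
Set Implicit Arguments. Unset Strict Implicit. Unset Printing Implicit Defensive.
Local Open Scope ring_scope.
Import GRing.Theory.

Lemma sact_0r (K : fieldType) (S : ksemigroup K) (a : K) : sact a (szero S) = szero S.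
Proof. by rewrite -[X in sact a X](smul0l (szero S)) sactMr smul0l. Qed.

Lemma lam_refl (K : fieldType) (S : ksemigroup K) (p : S) : lam p p.
Proof. exists 1; split; [exact: oner_neq0 | by rewrite sact1]. Qed.

Lemma lam_sym (K : fieldType) (S : ksemigroup K) (p q : S) : lam p q -> lam q p.
Proof.
move=> [a [a0 ->]]; exists a^-1; split; first by rewrite invr_eq0.
by rewrite sactA mulVf // sact1.
Qed.

Lemma lam_trans (K : fieldType) (S : ksemigroup K) (p q r : S) :
  lam p q -> lam q r -> lam p r.
Proof.
move=> [a [a0 ->]] [b [b0 ->]]; exists (a * b); split; last by rewrite sactA.
by rewrite mulf_neq0.
Qed.

Lemma lam_mull (K : fieldType) (S : ksemigroup K) (r p q : S) :
  lam p q -> lam (smul r p) (smul r q).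
Proof. by move=> [a [a0 ->]]; exists a; split => //; rewrite sactMr. Qed.

Lemma lam_mulr (K : fieldType) (S : ksemigroup K) (r p q : S) :
  lam p q -> lam (smul p r) (smul q r).
Proof. by move=> [a [a0 ->]]; exists a; split => //; rewrite sactMl. Qed.

Lemma lam_mul2 (K : fieldType) (S : ksemigroup K) (p q r s : S) :
  lam p q -> lam r s -> lam (smul p r) (smul q s).
Proof. move=> H1 H2; apply: lam_trans (lam_mulr _ H1) (lam_mull _ H2). Qed.

Lemma lam_zero (K : fieldType) (S : ksemigroup K) (p q : S) :
  lam p q -> (p = szero S <-> q = szero S).
Proof.
move=> H; split.
  move: (lam_sym H) => [a [_ ->]] ->; exact: sact_0r.
by move: H => [a [_ ->]] ->; exact: sact_0r.
Qed.

Lemma lam_gen (K : fieldType) (S : ksemigroup K) (P Q e f : S) :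
  lam P Q -> smul e P = P -> smul Q f = Q -> smul e Q = smul P f -> P = Q.
Proof.
move=> H HeP HQf HeQ.
move: (H) => [a [_ HPQ]]; move: (lam_sym H) => [b [_ HQP]].
have HPf : smul P f = P by rewrite {1}HPQ -sactMl HQf -HPQ.
have HeQ' : smul e Q = Q by rewrite {1}HQP -sactMr HeP -HQP.
by rewrite -HPf -HeQ HeQ'.
Qed.

Lemma gd_inv (G : groupoid) (x : G) : gd (ginv x) = gr x.
Proof. by rewrite /gd /gr ginvK. Qed.

Lemma gr_inv (G : groupoid) (x : G) : gr (ginv x) = gd x.
Proof. by rewrite /gd /gr ginvK. Qed.

Lemma ginv_mul (G : groupoid) (a b : G) : gd a = gr b ->
  ginv (gmul a b) = gmul (ginv b) (ginv a).
Proof.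
move=> H.
have e1 : gmul (gmul (ginv (gmul a b)) a) (ginv a) = ginv (gmul a b).
  apply: gmulKr; rewrite ginvK; exact: (gr_mul H).
have e2 : gmul (gmul a b) (ginv b) = a := gmulKr H.
have e3 : gmul (ginv (gmul a b)) (gmul (gmul a b) (ginv b)) = ginv b.
  apply: gmulKl; rewrite ginvK; exact: (gd_mul H).
rewrite e2 in e3.
by rewrite -e1 e3.
Qed.

Theorem mainTheorem17 (K : fieldType) (G : groupoid) (S : ksemigroup K)
  (Gam : G -> S) (sigma : G -> G -> K) :
  kcancellative S ->
  partial_proj_rep Gam ->
  factor_set Gam sigma ->
  (forall x : G, smul (Gam (gr x)) (Gam x) = Gam x /\
                 smul (Gam x) (Gam (gd x)) = Gam x) ->
  forall x y : G,
    (* eta_x^2 = eta_x sigma(x,x^-1),  n_x^2 = n_x *)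
    (smul (eta Gam x) (eta Gam x) = sact (sigma x (ginv x)) (eta Gam x) /\
     smul (nelt Gam sigma x) (nelt Gam sigma x) = nelt Gam sigma x) /\
    (* eta_x = 0 <-> sigma(x,x^-1) = 0 <-> Gamma(x) = 0 <-> n_x = 0 *)
    ((eta Gam x = szero S <-> sigma x (ginv x) = 0) /\
     (sigma x (ginv x) = 0 <-> Gam x = szero S) /\
     (Gam x = szero S <-> nelt Gam sigma x = szero S)) /\
    (gr x = gr y ->
       (smul (eta Gam x) (eta Gam y) = szero S <->
          smul (eta Gam y) (eta Gam x) = szero S) /\
       (smul (eta Gam y) (eta Gam x) = szero S <->
          smul (nelt Gam sigma x) (nelt Gam sigma y) = szero S)) /\
    (gd x = gr y ->
       smul (Gam x) (nelt Gam sigma y) = smul (nelt Gam sigma (gmul x y)) (Gam x)) /\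
    (gr x = gr y ->
       smul (nelt Gam sigma x) (nelt Gam sigma y)
         = smul (nelt Gam sigma y) (nelt Gam sigma x)).
Proof.
move=> Hcanc Hrep Hfs Hid.
have A1r : forall x y : G, gd x = gr y ->
    lam (smul (Gam (ginv x)) (smul (Gam x) (Gam y))) (smul (Gam (ginv x)) (Gam (gmul x y))).
  by move=> x y H; have := (Hrep x y H).1; rewrite !smulA.
have A2r : forall x y : G, gd x = gr y ->
    lam (smul (Gam x) (smul (Gam y) (Gam (ginv y)))) (smul (Gam (gmul x y)) (Gam (ginv y))).
  by move=> x y H; have := (Hrep x y H).2; rewrite !smulA.
have triple : forall x : G, lam (smul (Gam x) (smul (Gam (ginv x)) (Gam x))) (Gam x).
  move=> x; have := A2r x (ginv x); rewrite gr_inv ginvK => /(_ erefl).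
  by have := (Hid x).1; rewrite /gr => ->.
have etaZ : forall x : G, eta Gam x = szero S -> Gam x = szero S.
  move=> x He; apply/(lam_zero (triple x)).
  by rewrite -smulA -/(eta Gam x) He smul0l.
have GZ : forall x : G, Gam x = szero S -> eta Gam x = szero S.
  by move=> x H; rewrite /eta H smul0l.
have S0 : forall x : G, eta Gam x = szero S <-> sigma x (ginv x) = 0.
  move=> x; split.
    move=> He; apply: (Hfs x (ginv x)).2 => -[_]; exact.
  move=> Hs; case: (classic (eta Gam x = szero S)) => // Hne.
  have := ((Hfs x (ginv x)).1 (conj (esym (gr_inv x)) Hne)).1.
  by rewrite Hs eqxx.
have SE : forall x : G, Gam x <> szero S ->
    [/\ sigma (ginv x) x != 0, sigma x (ginv x) = sigma (ginv x) x,
        eta Gam x <> szero S &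
        smul (eta Gam x) (Gam x) = sact (sigma x (ginv x)) (Gam x)].
  move=> x Hx.
  have Hne : eta Gam x <> szero S by move/etaZ.
  have Hx' : Gam (ginv x) <> szero S.
    by move=> H; apply: Hne; rewrite /eta H smul0r.
  have Hne' : smul (Gam (ginv x)) (Gam x) <> szero S.
    by move=> H; apply: Hx'; apply: etaZ; rewrite /eta ginvK.
  have [_ [_ E1]] := (Hfs x (ginv x)).1 (conj (esym (gr_inv x)) Hne).
  have [t0 [E2 _]] := (Hfs (ginv x) x).1 (conj (gd_inv x) Hne').
  move: E1; rewrite ginvK -/(gr x) (Hid x).1 => E1.
  move: E2; rewrite ginvK -[gmul (ginv x) x]/(gd x) (Hid x).2 => E2.
  split => //.
  by apply: (Hcanc _ _ _ Hx); rewrite -E1 -E2.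
have Ceta : forall x : G,
    smul (eta Gam x) (eta Gam x) = sact (sigma x (ginv x)) (eta Gam x).
  move=> x; case: (classic (Gam x = szero S)) => Hx.
    by rewrite (GZ x Hx) smul0l ((S0 x).1 (GZ x Hx)) sact0.
  have [_ _ _ E] := SE x Hx.
  by rewrite {2}/eta -smulA E -sactMl.
have nlam : forall x : G, lam (nelt Gam sigma x) (eta Gam x).
  move=> x; rewrite /nelt; case: excluded_middle_informative => Hx.
    rewrite (GZ x Hx); exact: lam_refl.
  have [t0 _ _ _] := SE x Hx.
  by exists (sigma (ginv x) x)^-1; split => //; rewrite invr_eq0.
have nidem : forall x : G,
    smul (nelt Gam sigma x) (nelt Gam sigma x) = nelt Gam sigma x.
  move=> x; rewrite /nelt; case: excluded_middle_informative => Hx.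
    by rewrite smul0l.
  have [t0 Est _ _] := SE x Hx.
  by rewrite -sactMl -sactMr Ceta Est !sactA -?mulrA mulVf ?mulr1.
have comm : forall x y : G, gr x = gr y ->
    lam (smul (eta Gam x) (eta Gam y)) (smul (eta Gam y) (eta Gam x)).
  have S1 : forall x y : G, gr x = gr y ->
      lam (smul (eta Gam x) (eta Gam y))
          (smul (Gam x) (smul (Gam (gmul (ginv x) y)) (Gam (ginv y)))).
    move=> x y H; rewrite /eta !smulA; apply: lam_mull.
    by apply: A2r; rewrite gd_inv.
  move=> x y H.
  have Hc : gd (ginv x) = gr y by rewrite gd_inv.
  set u := gmul (ginv x) y.
  have Eu' : ginv u = gmul (ginv y) x by rewrite /u (ginv_mul Hc) ginvK.
  have Exu : gmul x u = y by have := gmulKl Hc; rewrite ginvK.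
  have Euy : gmul u (ginv y) = ginv x := gmulKr Hc.
  have Hxu : gd x = gr u by rewrite /u /gr (gr_mul Hc) -/(gr (ginv x)) gr_inv.
  have Huy : gd u = gr (ginv y) by rewrite /u /gd (gd_mul Hc) -/(gd y) -/(gr (ginv y)) gr_inv.
  have L1 : lam (smul (Gam y) (smul (Gam (ginv u)) (Gam (ginv x))))
      (smul (Gam x) (smul (Gam u) (smul (Gam (ginv u)) (Gam (ginv x))))).
    apply: lam_sym; have := lam_mulr (Gam (ginv x)) (A2r x u Hxu).
    by rewrite Exu !smulA.
  have L2 : lam (smul (Gam (ginv u)) (Gam (ginv x)))
      (smul (Gam (ginv u)) (smul (Gam u) (Gam (ginv y)))).
    by apply: lam_sym; have := A1r u (ginv y) Huy; rewrite Euy.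
  have L3 : lam (smul (Gam x) (smul (Gam u) (smul (Gam (ginv u)) (smul (Gam u) (Gam (ginv y))))))
      (smul (Gam x) (smul (Gam u) (Gam (ginv y)))).
    apply: lam_mull; have := lam_mulr (Gam (ginv y)) (triple u).
    by rewrite !smulA.
  apply: lam_trans (S1 x y H) _.
  apply: lam_sym; apply: lam_trans (S1 y x (esym H)) _.
  rewrite -Eu'; apply: lam_trans L1 _.
  apply: lam_trans L3; apply: lam_mull; apply: lam_mull; exact: L2.
move=> x y.
split; first by split; [exact: Ceta | exact: nidem].
split.
  split; first exact: S0.
  split.
    split => H; first by apply: etaZ; apply/S0.
    by apply/S0; apply: GZ.
  split => H.
    by rewrite /nelt; case: excluded_middle_informative.
  by apply: etaZ; apply/(lam_zero (nlam x)).
have nn : gr x = gr y -> lam (smul (nelt Gam sigma x) (nelt Gam sigma y))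
                          (smul (eta Gam y) (eta Gam x)).
  move=> H; apply: lam_trans (lam_mul2 (nlam x) (nlam y)) (comm x y H).
split.
  move=> H; split; first exact: lam_zero (comm x y H).
  split => H'.
    by apply/(lam_zero (nn H)).
  by apply/(lam_zero (nn H)).
split; last first.
  move=> H; apply: (@lam_gen _ _ _ _ (nelt Gam sigma x) (nelt Gam sigma x)).
  - apply: lam_trans (nn H) _; apply: lam_sym.
    apply: lam_trans (lam_mul2 (nlam y) (nlam x)) _; exact: lam_refl.
  - by rewrite -smulA nidem.
  - by rewrite smulA nidem.
  - by rewrite smulA.
move=> Hxy; symmetry.
set w := gmul x y.
apply: (@lam_gen _ _ _ _ (nelt Gam sigma w) (nelt Gam sigma y)); last first.
- by rewrite smulA.
- by rewrite smulA nidem.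
- by rewrite -smulA nidem.
have Ew : ginv w = gmul (ginv y) (ginv x) := ginv_mul Hxy.
apply: lam_trans (lam_mulr (Gam x) (nlam w)) _.
rewrite /eta smulA Ew.
have Hyx : gd (ginv y) = gr (ginv x) by rewrite gd_inv gr_inv.
have L := A2r _ _ Hyx; rewrite ginvK in L.
apply: lam_trans (lam_mull (Gam w) (lam_sym L)) _.
apply: lam_trans (lam_sym (_ : lam (smul (Gam x) (smul (Gam y) (smul (Gam (ginv y))
   (smul (Gam (ginv x)) (Gam x))))) _)) _.
  by have := lam_mulr (smul (Gam (ginv x)) (Gam x)) (A2r x y Hxy); rewrite !smulA.
have Hyx' : gr y = gr (ginv x) by rewrite gr_inv.
apply: lam_trans (_ : lam _ (smul (Gam x) (smul (Gam (ginv x)) (smul (Gam x)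
   (smul (Gam y) (Gam (ginv y))))))) _.
  by have := lam_mull (Gam x) (comm y (ginv x) Hyx'); rewrite /eta ginvK !smulA.
apply: lam_trans (_ : lam _ (smul (Gam x) (smul (Gam y) (Gam (ginv y))))) _.
  by have := lam_mulr (smul (Gam y) (Gam (ginv y))) (triple x); rewrite !smulA.
exact: lam_mull (lam_sym (nlam y)).
Qed.
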